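(* Let $p$ be any of the following patterns, or any pattern in the same symmetry class as one of them: $(123,\{0,1,2\},\{0,1,2\})$, $(123,\{0,1,2\},\{0,1,3\})$, $(123,\{0,1,2\},\{0,2,3\})$, $(123,\{0,1,2\},\{1,2,3\})$, $(123,\{0,1,3\},\{0,1,3\})$, $(123,\{0,1,3\},\{0,2,3\})$, $(132,\{0,1,2\},\{0,1,2\})$, $(132,\{0,1,2\},\{0,1,3\})$, $(132,\{0,1,2\},\{0,2,3\})$, $(132,\{0,1,2\},\{1,2,3\})$, $(132,\{0,1,3\},\{0,1,3\})$, $(132,\{0,1,3\},\{0,2,3\})$, $(132,\{0,1,3\},\{1,2,3\})$, $(132,\{0,2,3\},\{0,2,3\})$, $(132,\{0,2,3\},\{1,2,3\})$, $(132,\{1,2,3\},\{1,2,3\})$. Then for all $n\ge3$, $a_n(p)=n!-(n-3)!$.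
   Context: For $n\ge1$, $\mathcal S_n$ is the set of permutations $\pi=\pi_1\cdots\pi_n$ of $[n]$. A bi-vincular pattern of length $k$ is a triple $p=(\sigma,X,Y)$ with $\sigma\in\mathcal S_k$ and $X,Y\subseteq\{0,1,\dots,k\}$. A permutation $\pi\in\mathcal S_n$ contains $p$ if there are indices $1\le i_1<\dots<i_k\le n$ such that $(\pi_{i_1},\dots,\pi_{i_k})$ is order-isomorphic to $\sigma$ and, letting $j_1<\dots<j_k$ be the values $\pi_{i_1},\dots,\pi_{i_k}$ sorted increasingly and setting $i_0=j_0=0$, $i_{k+1}=j_{k+1}=n+1$, one has $i_{x+1}=i_x+1$ for all $x\in X$ and $j_{y+1}=j_y+1$ for all $y\in Y$. Otherwise $\pi$ avoids $p$; $a_n(p)$ is the number of $\pi\in\mathcal S_n$ avoiding $p$. Symmetries: $p^{i}=(\sigma^{-1},Y,X)$, $p^{r}=(\sigma^{r},\{k-x:x\in X\},Y)$, $p^{c}=(\sigma^{c},X,\{k-y:y\in Y\})$ with $\sigma^r_j=\sigma_{k+1-j}$, $\sigma^c_j=k+1-\sigma_j$; the symmetry class of $p$ consists of all patterns obtained from $p$ by finitely many applications of these maps. *)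

(* Defs.v *)
From mathcomp Require Import all_boot all_fingroup.
Set Implicit Arguments. Unset Strict Implicit. Unset Printing Implicit Defensive.

(* Permutations of [n] are represented by 'S_n (values 0..n-1 instead of 1..n;
   everything below is shifted to 1-based positions/values where the paper's
   boundary conventions i_0 = j_0 = 0, i_{k+1} = j_{k+1} = n+1 matter). *)

Record bvpat (k : nat) := BVPat {
  bv_sigma : 'S_k;
  bv_X : {set 'I_k.+1};
  bv_Y : {set 'I_k.+1} }.

(* 1-based positions i_0 = 0 < i_1 < ... < i_k, and i_{k+1} = n+1,
   of the occurrence selected by f *)
Definition ipos (k n : nat) (f : {ffun 'I_k -> 'I_n}) (x : nat) : nat :=
  nth n.+1 (0 :: [seq (val (f a)).+1 | a <- enum 'I_k]) x.
(* 1-based values j_0 = 0, j_1 < ... < j_k (the values pi_{i_1},...,pi_{i_k}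
   sorted increasingly), and j_{k+1} = n+1 *)
Definition jval (k n : nat) (pi : 'S_n) (f : {ffun 'I_k -> 'I_n}) (y : nat) : nat :=
  nth n.+1 (0 :: sort leq [seq (val (pi (f a))).+1 | a <- enum 'I_k]) y.

Definition contains (k n : nat) (p : bvpat k) (pi : 'S_n) : bool :=
  [exists f : {ffun 'I_k -> 'I_n},
    [&& [forall a : 'I_k, forall b : 'I_k, (a < b) ==> (f a < f b)],
        [forall a : 'I_k, forall b : 'I_k,
           (pi (f a) < pi (f b)) == (bv_sigma p a < bv_sigma p b)],
        [forall x in bv_X p, ipos f (val x).+1 == (ipos f (val x)).+1] &
        [forall y in bv_Y p, jval pi f (val y).+1 == (jval pi f (val y)).+1]]].

Definition avoiders (k n : nat) (p : bvpat k) : nat :=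
  #|[set pi : 'S_n | ~~ contains p pi]|.

Lemma rev_perm_inj k (s : 'S_k) : injective (fun j : 'I_k => s (rev_ord j)).
Proof. by move=> i j H; apply: rev_ord_inj; apply: (@perm_inj _ s). Qed.
Lemma compl_perm_inj k (s : 'S_k) : injective (fun j : 'I_k => rev_ord (s j)).
Proof. by move=> i j H; apply: (@perm_inj _ s); apply: rev_ord_inj. Qed.

Definition perm_rev k (s : 'S_k) : 'S_k := perm (@rev_perm_inj k s).
Definition perm_compl k (s : 'S_k) : 'S_k := perm (@compl_perm_inj k s).

Definition pat_inv k (p : bvpat k) : bvpat k :=
  BVPat (bv_sigma p)^-1 (bv_Y p) (bv_X p).
Definition pat_rev k (p : bvpat k) : bvpat k :=
  BVPat (perm_rev (bv_sigma p)) [set rev_ord x | x in bv_X p] (bv_Y p).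
Definition pat_compl k (p : bvpat k) : bvpat k :=
  BVPat (perm_compl (bv_sigma p)) (bv_X p) [set rev_ord y | y in bv_Y p].

Inductive sym_class k (p : bvpat k) : bvpat k -> Prop :=
  | sym_refl : sym_class p p
  | sym_inv q : sym_class p q -> sym_class p (pat_inv q)
  | sym_rev q : sym_class p q -> sym_class p (pat_rev q)
  | sym_compl q : sym_class p q -> sym_class p (pat_compl q).

Definition p123 : 'S_3 := 1%g.
Definition p132 : 'S_3 := tperm (inord 1) (inord 2).
Definition mkpat3 (s : 'S_3) (X Y : seq nat) : bvpat 3 :=
  BVPat s [set x : 'I_4 | val x \in X] [set y : 'I_4 | val y \in Y].

Definition listed_patterns : seq (bvpat 3) :=
  [:: mkpat3 p123 [:: 0; 1; 2] [:: 0; 1; 2];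
      mkpat3 p123 [:: 0; 1; 2] [:: 0; 1; 3];
      mkpat3 p123 [:: 0; 1; 2] [:: 0; 2; 3];
      mkpat3 p123 [:: 0; 1; 2] [:: 1; 2; 3];
      mkpat3 p123 [:: 0; 1; 3] [:: 0; 1; 3];
      mkpat3 p123 [:: 0; 1; 3] [:: 0; 2; 3];
      mkpat3 p132 [:: 0; 1; 2] [:: 0; 1; 2];
      mkpat3 p132 [:: 0; 1; 2] [:: 0; 1; 3];
      mkpat3 p132 [:: 0; 1; 2] [:: 0; 2; 3];
      mkpat3 p132 [:: 0; 1; 2] [:: 1; 2; 3];
      mkpat3 p132 [:: 0; 1; 3] [:: 0; 1; 3];
      mkpat3 p132 [:: 0; 1; 3] [:: 0; 2; 3];
      mkpat3 p132 [:: 0; 1; 3] [:: 1; 2; 3];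
      mkpat3 p132 [:: 0; 2; 3] [:: 0; 2; 3];
      mkpat3 p132 [:: 0; 2; 3] [:: 1; 2; 3];
      mkpat3 p132 [:: 1; 2; 3] [:: 1; 2; 3]].

(* Main.v *)
Require Import Defs.
From mathcomp Require Import all_boot all_fingroup.
From mathcomp Require Import alt primitive_action.
From mathcomp Require Import zify.
Set Implicit Arguments. Unset Strict Implicit. Unset Printing Implicit Defensive.

Definition pos (m n' a : nat) : nat := if a < m then a else n' + a.

Lemma pos_lt m n' a b : a < 3 -> b < 3 -> (pos m n' a < pos m n' b) = (a < b).
Proof. rewrite /pos; case: ifP; case: ifP; lia. Qed.

Lemma chain n' m (L : nat -> nat) u0 u1 u2 :
  u0 < u1 -> u1 < u2 -> u2 < n'.+3 -> m < 4 ->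
  L 0 = 0 -> L 1 = u0.+1 -> L 2 = u1.+1 -> L 3 = u2.+1 -> L 4 = n'.+4 ->
  (forall x, x < 4 -> x != m -> L x.+1 == (L x).+1) <->
  [/\ u0 = pos m n' 0, u1 = pos m n' 1 & u2 = pos m n' 2].
Proof.
move=> h01 h12 h2 hm L0 L1 L2 L3 L4; split.
- move=> H; rewrite /pos.
  case: m hm H => [|[|[|[|m]]]] // _ H.
  + move: (H 1 isT isT) (H 2 isT isT) (H 3 isT isT); rewrite L1 L2 L3 L4 /=; split; lia.
  + move: (H 0 isT isT) (H 2 isT isT) (H 3 isT isT); rewrite L0 L1 L2 L3 L4 /=; split; lia.
  + move: (H 0 isT isT) (H 1 isT isT) (H 3 isT isT); rewrite L0 L1 L2 L3 L4 /=; split; lia.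
  + move: (H 0 isT isT) (H 1 isT isT) (H 2 isT isT); rewrite L0 L1 L2 L3 /=; split; lia.
- case=> e0 e1 e2 x hx hxm; rewrite /pos in e0 e1 e2.
  case: x hx hxm => [|[|[|[|x]]]] // _ hxm.
  all: rewrite ?L0 ?L1 ?L2 ?L3 ?L4; apply/eqP.
  all: case: m hm hxm e0 e1 e2 => [|[|[|[|m]]]] //= _ _; lia.
Qed.
Definition i0 : 'I_3 := @Ordinal 3 0 isT.
Definition i1 : 'I_3 := @Ordinal 3 1 isT.
Definition i2 : 'I_3 := @Ordinal 3 2 isT.

Lemma enum3 : enum 'I_3 = [:: i0; i1; i2].
Proof. by apply: (inj_map val_inj); rewrite val_enum_ord. Qed.

Lemma ord3P (P : 'I_3 -> Prop) : P i0 -> P i1 -> P i2 -> forall a, P a.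
Proof.
move=> h0 h1 h2 [[|[|[|a]]] ha] //.
- by rewrite (_ : Ordinal ha = i0) //; apply: val_inj.
- by rewrite (_ : Ordinal ha = i1) //; apply: val_inj.
- by rewrite (_ : Ordinal ha = i2) //; apply: val_inj.
Qed.

Definition posI n' (m : 'I_4) (a : 'I_3) : 'I_(n'.+3) := inord (pos m n' a).

Lemma posK n' m a : (posI n' m a : nat) = pos m n' a.
Proof.
rewrite /posI inordK //; have := ltn_ord a; rewrite /pos; case: ifP; lia.
Qed.

Lemma sort3 (s : 'S_3) (w : 'I_3 -> nat) :
  (forall a b, (w a < w b) = (s a < s b)) ->
  sort leq [seq (w a).+1 | a <- enum 'I_3] =
  [seq (w (s^-1 b)%g).+1 | b <- enum 'I_3].
Proof.
move=> H; apply: (sorted_eq leq_trans anti_leq).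
- exact: (sort_sorted leq_total).
- rewrite enum3 /= !ltnS; apply/and3P; split => //.
  + by apply: ltnW; rewrite H !permKV.
  + by apply: ltnW; rewrite H !permKV.
- rewrite perm_sort.
  have -> : [seq (w (s^-1 b)%g).+1 | b <- enum 'I_3] =
            [seq (w a).+1 | a <- [seq (s^-1 b)%g | b <- enum 'I_3]]
    by rewrite -[X in _ = X]map_comp.
  apply: perm_map; apply: uniq_perm.
  + exact: enum_uniq.
  + by rewrite map_inj_uniq ?enum_uniq //; apply: perm_inj.
  + move=> a; rewrite mem_enum; apply/esym/mapP; exists (s a);
    by rewrite ?mem_enum ?permK.
Qed.

Lemma forallX (X : {set 'I_4}) (m : 'I_4) (P : nat -> bool) :
  (forall x, (x \in X) = (x != m)) ->
  [forall x in X, P (val x)] <-> (forall x, x < 4 -> x != val m -> P x).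
Proof.
move=> hX; split.
- move=> /forallP H x hx hm; have /implyP := H (Ordinal hx); apply.
  by rewrite hX -(inj_eq val_inj).
- move=> H; apply/forallP => x; apply/implyP; rewrite hX => hm.
  by apply: H; rewrite ?ltn_ord // (inj_eq val_inj).
Qed.

Lemma iposE n (f : {ffun 'I_3 -> 'I_n}) :
  [/\ ipos f 0 = 0, ipos f 1 = (f i0).+1, ipos f 2 = (f i1).+1,
      ipos f 3 = (f i2).+1 & ipos f 4 = n.+1].
Proof. by rewrite /ipos enum3. Qed.

Lemma jvalE n (s : 'S_3) (pi : 'S_n) (f : {ffun 'I_3 -> 'I_n}) :
  (forall a b, (val (pi (f a)) < val (pi (f b))) = (s a < s b)) ->
  [/\ jval pi f 0 = 0, jval pi f 1 = (val (pi (f (s^-1 i0)%g))).+1,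
      jval pi f 2 = (val (pi (f (s^-1 i1)%g))).+1,
      jval pi f 3 = (val (pi (f (s^-1 i2)%g))).+1 & jval pi f 4 = n.+1].
Proof.
move=> H; rewrite /jval (sort3 (w := fun a => val (pi (f a))) H) enum3.
by [].
Qed.

Lemma posI_lt n' m (a b : 'I_3) : (posI n' m a < posI n' m b) = (a < b).
Proof. by rewrite !posK pos_lt. Qed.

Lemma contains_char n' (p : bvpat 3) (mX mY : 'I_4) (pi : 'S_(n'.+3)) :
  (forall x, (x \in bv_X p) = (x != mX)) ->
  (forall y, (y \in bv_Y p) = (y != mY)) ->
  contains p pi =
  [forall a : 'I_3, pi (posI n' mX a) == posI n' mY (bv_sigma p a)].
Proof.
move=> hX hY; set s := bv_sigma p.
apply/existsP/forallP.
- case=> f /and4P [/forallP Hinc /forallP Hord HX HY].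
  have Hi : forall a b : 'I_3, a < b -> f a < f b.
    by move=> a b hab; have /forallP/(_ b)/implyP := Hinc a; apply.
  have Hw : forall a b, (val (pi (f a)) < val (pi (f b))) = (s a < s b).
    by move=> a b; have /forallP/(_ b)/eqP := Hord a.
  have HX' := (forallX (fun x => ipos f x.+1 == (ipos f x).+1) hX).1 HX.
  have [I0 I1 I2 I3 I4] := iposE f.
  have [e0 e1 e2] := (chain (Hi i0 i1 isT) (Hi i1 i2 isT) (ltn_ord (f i2))
       (ltn_ord mX) I0 I1 I2 I3 I4).1 HX'.
  have fE : forall a, f a = posI n' mX a.
    by apply: ord3P; apply: val_inj; rewrite /= posK.
  have HY' := (forallX (fun x => jval pi f x.+1 == (jval pi f x).+1) hY).1 HY.
  have [J0 J1 J2 J3 J4] := jvalE Hw.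
  have h01 : val (pi (f (s^-1 i0)%g)) < val (pi (f (s^-1 i1)%g))
    by rewrite Hw !permKV.
  have h12 : val (pi (f (s^-1 i1)%g)) < val (pi (f (s^-1 i2)%g))
    by rewrite Hw !permKV.
  have [g0 g1 g2] := (chain h01 h12 (ltn_ord _) (ltn_ord mY) J0 J1 J2 J3 J4).1 HY'.
  have gE : forall b, val (pi (f (s^-1 b)%g)) = pos mY n' b by apply: ord3P.
  move=> a; rewrite -fE; apply/eqP/val_inj; rewrite /= posK -gE permK.
  by [].
- move=> Hc.
  have Hc' : forall a, pi (posI n' mX a) = posI n' mY (s a) by move=> a; apply/eqP.
  set F := [ffun a => posI n' mX a].
  have FE : forall a, F a = posI n' mX a by move=> a; rewrite ffunE.
  exists F; apply/and4P; split.
  + apply/forallP=> a; apply/forallP=> b; apply/implyP=> hab.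
    by rewrite !FE posI_lt.
  + apply/forallP=> a; apply/forallP=> b.
    by rewrite !FE !Hc' posI_lt.
  + apply/(forallX (fun x => ipos F x.+1 == (ipos F x).+1) hX).
    have [I0 I1 I2 I3 I4] := iposE F.
    apply: (proj2 (chain _ _ (ltn_ord _) (ltn_ord mX) I0 I1 I2 I3 I4)).
    * by rewrite !FE posI_lt.
    * by rewrite !FE posI_lt.
    * by rewrite !FE !posK.
  + have Hw : forall a b, (val (pi (F a)) < val (pi (F b))) = (s a < s b).
      by move=> a b; rewrite !FE !Hc' posI_lt.
    apply/(forallX (fun x => jval pi F x.+1 == (jval pi F x).+1) hY).
    have [J0 J1 J2 J3 J4] := jvalE Hw.
    apply: (proj2 (chain _ _ (ltn_ord _) (ltn_ord mY) J0 J1 J2 J3 J4)).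
    * by rewrite Hw !permKV.
    * by rewrite Hw !permKV.
    * by rewrite !FE !Hc' /= !permKV !posK.
Qed.

Lemma card_fixed N (P Q : 'I_3 -> 'I_N) : injective P -> injective Q -> 3 <= N ->
  #|[set pi : 'S_N | [forall a, pi (P a) == Q a]]| = (N - 3)`!.
Proof.
move=> iP iQ hN.
have [g Hg] : exists g : 'S_N, forall a, g (P a) = Q a.
  have h3 : 3 <= #|'I_N| by rewrite card_ord.
  have tr := ntransitive_weak h3 (Sym_trans 'I_N).
  pose tP := map_tuple P (ord_tuple 3).
  pose tQ := map_tuple Q (ord_tuple 3).
  have dP : tP \in 3.-dtuple([set: 'I_N]).
    rewrite inE; apply/andP; split; last by apply/subsetP => x; rewrite inE.
    by rewrite map_inj_uniq // enum_uniq.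
  have dQ : tQ \in 3.-dtuple([set: 'I_N]).
    rewrite inE; apply/andP; split; last by apply/subsetP => x; rewrite inE.
    by rewrite map_inj_uniq // enum_uniq.
  have [a _ ha] := atransP2 tr dP dQ.
  exists a => i.
  have := congr1 (fun t => tnth t i) ha.
  by rewrite /= /n_act tnth_map !tnth_map tnth_ord_tuple.
set B := P @: [set: 'I_3].
have cB : #|B| = 3 by rewrite card_imset // cardsT card_ord.
have cCB : #|~: B| = N - 3.
  by have := cardsC B; rewrite cB card_ord; lia.
have -> : [set pi : 'S_N | [forall a, pi (P a) == Q a]] =
          (fun h => h * g)%g @: [set h in perm_on (~: B)].
  apply/setP => pi; rewrite inE; apply/forallP/imsetP.
  - move=> H; exists (pi * g^-1)%g; last by rewrite mulgVK.
    rewrite inE; apply/subsetP => x; rewrite !inE; apply: contraR.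
    move=> /negbNE /imsetP [a _ ->].
    by rewrite permM (eqP (H a)) -Hg permK.
  - case=> h; rewrite inE => hh -> a.
    rewrite permM (out_perm hh) ?Hg //.
    by rewrite !inE negbK; apply/imsetP; exists a.
rewrite card_imset; last exact: (can_inj (mulgK g)).
by rewrite cardsE card_perm cCB.
Qed.

Lemma posI_inj n' m : injective (posI n' m).
Proof.
move=> a b e; have := congr1 (@nat_of_ord _) e; rewrite !posK /pos => e'.
apply: val_inj => /=; move: e' (ltn_ord a) (ltn_ord b); case: ifP; case: ifP; lia.
Qed.

Lemma miss (X : {set 'I_4}) : #|X| = 3 -> exists m, forall x, (x \in X) = (x != m).
Proof.
move=> cX; have : #|~: X| == 1.
  by apply/eqP; have := cardsC X; rewrite cX card_ord; lia.
case/cards1P => m hm; exists m => x.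
by rewrite -[x \in X]negbK -in_setC hm in_set1.
Qed.

Lemma card_miss (L : seq nat) (m : nat) : m < 4 ->
  (forall x, x < 4 -> (x \in L) = (x != m)) ->
  #|[set x : 'I_4 | val x \in L]| = 3.
Proof.
move=> hm H.
have -> : [set x : 'I_4 | val x \in L] = ~: [set inord m].
  apply/setP => x; rewrite !inE H ?ltn_ord //.
  by rewrite -(inj_eq val_inj) /= inordK.
by rewrite cardsC1 card_ord.
Qed.

Ltac cm := first [ apply: (@card_miss _ 0) => //; by move=> [|[|[|[|x]]]]
                 | apply: (@card_miss _ 1) => //; by move=> [|[|[|[|x]]]]
                 | apply: (@card_miss _ 2) => //; by move=> [|[|[|[|x]]]]
                 | apply: (@card_miss _ 3) => //; by move=> [|[|[|[|x]]]] ].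

Lemma listed_card i : i < size listed_patterns ->
  #|bv_X (nth (mkpat3 1%g [::] [::]) listed_patterns i)| = 3 /\
  #|bv_Y (nth (mkpat3 1%g [::] [::]) listed_patterns i)| = 3.
Proof.
do 16 (case: i => [_ | i]; [ by split; cm | ]).
by [].
Qed.

Lemma general (p : bvpat 3) n : #|bv_X p| = 3 -> #|bv_Y p| = 3 -> 3 <= n ->
  avoiders n p = n`! - (n - 3)`!.
Proof.
move=> cX cY hn.
have [n' ->] : exists n', n = n'.+3 by exists (n - 3); lia.
have [mX hX] := miss cX; have [mY hY] := miss cY; rewrite /avoiders.
have -> : [set pi : 'S_(n'.+3) | ~~ contains p pi] =
  ~: [set pi : 'S_(n'.+3) | [forall a, pi (posI n' mX a) == posI n' mY (bv_sigma p a)]].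
  by apply/setP => pi; rewrite !inE (contains_char _ hX hY).
set C := [set pi : 'S_(n'.+3) | _].
have hC : #|C| = (n'.+3 - 3)`!.
  apply: card_fixed => //; first exact: posI_inj.
  by move=> a b /posI_inj /perm_inj.
move: (cardsC C); rewrite hC card_Sn; lia.
Qed.

Theorem mainTheorem20 (p : bvpat 3) :
  (exists2 i : nat, i < size listed_patterns &
     sym_class (nth (mkpat3 1%g [::] [::]) listed_patterns i) p) ->
  forall n : nat, 3 <= n -> avoiders n p = n`! - (n - 3)`!.
Proof.
case=> i hi hsym n hn.
have [cX cY] : #|bv_X p| = 3 /\ #|bv_Y p| = 3.
  elim: hsym => [| q _ [hx hy] | q _ [hx hy] | q _ [hx hy]] /=.
  - exact: listed_card.
  - by [].
  - by rewrite card_imset //; exact: rev_ord_inj.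
  - by rewrite card_imset //; exact: rev_ord_inj.
exact: general.
Qed.
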